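(* Let $d=(d_1,\ldots,d_n)$ be a degree sequence with $n\ge 3$, and let $m=\frac12\sum_i d_i$. There is a bridge-less cactus realization of $d$ if and only if $m\le\lfloor 1.5(n-1)\rfloor$ and $d_i$ is even for every $i$.
   Context: A degree sequence is a sequence $d=(d_1,\ldots,d_n)$ of integers with $d_i\in\{1,\ldots,n-1\}$, even sum, and $d_1\ge\cdots\ge d_n$. A realization of $d$ is a simple graph on $\{1,\ldots,n\}$ in which vertex $i$ has degree $d_i$. A cactus is a connected simple graph in which every edge lies on at most one cycle; it is bridge-less if no edge's removal disconnects it. *)

(* Defs.v *)
From mathcomp Require Import all_boot.
Set Implicit Arguments. Unset Strict Implicit. Unset Printing Implicit Defensive.

Definition simple_graph (T : finType) (e : rel T) : Prop :=
  irreflexive e /\ symmetric e.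

Definition deg (T : finType) (e : rel T) (x : T) : nat := #|[set y | e x y]|.

(* d = (d_1,...,d_n) given as a seq of length n; vertex i : 'I_n carries d_{i+1}. *)
Definition degree_sequence (n : nat) (d : seq nat) : Prop :=
  [/\ size d = n,
      all (fun k => (1 <= k <= n - 1)) d,
      ~~ odd (sumn d) &
      sorted geq d].

Definition realization (n : nat) (d : seq nat) (e : rel 'I_n) : Prop :=
  simple_graph e /\ forall i : 'I_n, deg e i = nth 0 d i.

Definition connected_graph (T : finType) (e : rel T) : Prop :=
  forall x y : T, connect e x y.

Definition is_cycle (T : finType) (e : rel T) (c : seq T) : Prop :=
  [/\ uniq c, 3 <= size c & cycle e c].

Definition cycle_edge (T : finType) (c : seq T) (x y : T) : bool :=
  ((x \in c) && (next c x == y)) || ((y \in c) && (next c y == x)).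

(* Two cycles are the same subgraph iff they have the same edge set. *)
Definition same_cycle (T : finType) (c1 c2 : seq T) : Prop :=
  forall x y, cycle_edge c1 x y = cycle_edge c2 x y.

Definition cactus (T : finType) (e : rel T) : Prop :=
  connected_graph e /\
  forall x y c1 c2, e x y -> is_cycle e c1 -> is_cycle e c2 ->
    cycle_edge c1 x y -> cycle_edge c2 x y -> same_cycle c1 c2.

Definition remove_edge (T : finType) (e : rel T) (x y : T) : rel T :=
  fun a b => e a b && ~~ (((a == x) && (b == y)) || ((a == y) && (b == x))).

Definition bridgeless (T : finType) (e : rel T) : Prop :=
  forall x y, e x y -> connected_graph (remove_edge e x y).

(* Main.v *)
Require Import Defs.
From mathcomp Require Import all_boot zify.
Set Implicit Arguments. Unset Strict Implicit. Unset Printing Implicit Defensive.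

Section CycleLemmas.
Variable T : finType.
Implicit Types (c : seq T) (x y : T).

Lemma next_cons_nth c u j : uniq (u :: c) -> j < size c ->
  next (u :: c) (nth u (u :: c) j) = nth u c j.
Proof.
move=> Uc jlt; have jlt' : j < size (u :: c) by rewrite /= ltnS ltnW.
by rewrite next_nth mem_nth // index_uniq.
Qed.

Lemma exit_lemma c (P : pred T) u w : uniq c -> u \in c -> P u -> w \in c -> ~~ P w ->
  exists2 v, v \in c & P v && ~~ P (next c v).
Proof.
move=> Uc uc Pu wc nPw.
have [i c' Dc] := rot_to uc.
have Uc' : uniq (u :: c') by rewrite -Dc rot_uniq.
apply/hasP; apply/negPn/negP => /hasPn H.
have H' : forall v, v \in u :: c' -> P v -> P (next (u :: c') v).
  move=> v; rewrite -Dc mem_rot (next_rot i Uc) => vc Pv.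
  by have := H v vc; rewrite Pv /= negbK.
have Hall : forall j, j < size (u :: c') -> P (nth u (u :: c') j).
  elim=> [|j IH] jlt //=.
  rewrite -(next_cons_nth Uc') //; apply: H'; first by rewrite mem_nth // ltnW.
  by apply: IH; rewrite ltnW.
have wc' : w \in u :: c' by rewrite -Dc mem_rot.
by move: nPw; rewrite -(nth_index u wc') Hall // index_mem.
Qed.

Lemma rot3 c x : uniq c -> 3 <= size c -> x \in c ->
  exists y z, [/\ next c x = y, next c y = z, x != y, y != z & z != x].
Proof.
move=> Uc sc xc; have [i c' Dc] := rot_to xc.
have Uc' : uniq (x :: c') by rewrite -Dc rot_uniq.
have sc' : 3 <= size (x :: c') by rewrite -Dc size_rot.
case: c' Dc Uc' sc' => [|y [|z r]] // Dc Uc' _.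
exists y, z; rewrite -(next_rot i Uc x) -(next_rot i Uc y) Dc.
move: Uc'; rewrite /= !inE !negb_or => /and3P[/andP[xy /andP[xz _]] /andP[yz _] _].
rewrite eqxx (negbTE yz) eq_sym (negbTE xy) eqxx.
by rewrite eq_sym xz.
Qed.

Lemma next_neq c x : uniq c -> 3 <= size c -> x \in c -> next c x != x.
Proof. by move=> Uc sc xc; have [y [z [-> _ xy _ _]]] := rot3 Uc sc xc; rewrite eq_sym. Qed.

Lemma next_prev_neq c x : uniq c -> 3 <= size c -> x \in c -> next c x != prev c x.
Proof.
move=> Uc sc xc; have [y [z [Dy Dz _ _ zx]]] := rot3 Uc sc xc.
apply/eqP => E; move: zx; rewrite -Dz -Dy E next_prev //; by rewrite eqxx.
Qed.

Lemma cycle_edge_sym c x y : cycle_edge c x y = cycle_edge c y x.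
Proof. by rewrite /cycle_edge orbC. Qed.

Lemma cycle_edgeE c x y : uniq c ->
  cycle_edge c x y = (x \in c) && ((y == next c x) || (y == prev c x)).
Proof.
move=> Uc; rewrite /cycle_edge; apply/idP/idP.
  case/orP => /andP[xc /eqP E].
    by rewrite xc E eqxx.
  by rewrite -E mem_next xc prev_next // eqxx orbT.
case/andP => xc /orP[/eqP ->|/eqP ->]; first by rewrite xc eqxx.
by rewrite mem_prev xc next_prev // eqxx orbT.
Qed.

Lemma cycle_edge_mem c x y : cycle_edge c x y -> (x \in c) && (y \in c).
Proof.
by rewrite /cycle_edge => /orP[]/andP[xc /eqP <-]; rewrite mem_next xc.
Qed.

Lemma cycle_edge_next c x : x \in c -> cycle_edge c x (next c x).
Proof. by move=> xc; rewrite /cycle_edge xc eqxx. Qed.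

End CycleLemmas.

Section Construction.
Variable T : finType.
Implicit Types (c C : seq T) (Cs : seq (seq T)) (x y : T).

Definition okcyc C := uniq C && (3 <= size C).
Definition ecs Cs : rel T := fun x y => has (fun C => cycle_edge C x y) Cs.
Definition inV Cs x := has (fun C => x \in C) Cs.

Fixpoint good Cs : Prop :=
  match Cs with
  | [::] => True
  | C :: Cs' => [/\ good Cs', okcyc C &
      (Cs' = [::] \/ exists s, [/\ s \in C, inV Cs' s &
                      forall w, w \in C -> inV Cs' w -> w = s])]
  end.

Lemma okcyc_noloop C x : okcyc C -> ~~ cycle_edge C x x.
Proof.
case/andP=> U S; apply/negP; rewrite /cycle_edge orbb => /andP[xc /eqP E].
by move: (next_neq U S xc); rewrite E eqxx.
Qed.

Lemma good_ok Cs C : good Cs -> C \in Cs -> okcyc C.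
Proof.
elim: Cs => [|C' Cs IH] //= [g ok _]; rewrite inE => /orP[/eqP->//|]; exact: IH.
Qed.

Lemma ecs_mem Cs x y : ecs Cs x y -> inV Cs x && inV Cs y.
Proof.
case/hasP=> C CC /cycle_edge_mem /andP[xc yc].
by apply/andP; split; apply/hasP; exists C.
Qed.

Lemma ecs_sym Cs : symmetric (ecs Cs).
Proof. by move=> x y; apply: eq_has => C; rewrite cycle_edge_sym. Qed.

Lemma edges_sub c C : uniq c ->
  (forall v, v \in c -> cycle_edge C v (next c v)) ->
  forall x y, cycle_edge c x y -> cycle_edge C x y.
Proof.
move=> Uc H x y; rewrite {1}/cycle_edge => /orP[]/andP[xc /eqP <-]; first exact: H.
by rewrite cycle_edge_sym; apply: H.
Qed.

Lemma cyc_in_cyc c C : okcyc c -> okcyc C ->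
  (forall x y, cycle_edge c x y -> cycle_edge C x y) ->
  forall x y, cycle_edge c x y = cycle_edge C x y.
Proof.
move=> /andP[Uc Sc] /andP[UC SC] H.
have step1 : forall v, v \in c -> forall y, cycle_edge c v y = cycle_edge C v y.
  move=> v vc y.
  have Ha := H _ _ (cycle_edge_next vc).
  have Hb : cycle_edge C v (prev c v).
    by apply: H; rewrite cycle_edgeE // vc eqxx orbT.
  have nab := next_prev_neq Uc Sc vc.
  move: Ha Hb; rewrite !(cycle_edgeE _ _ UC) (cycle_edgeE _ _ Uc) vc /=.
  case/andP=> -> /orP[]/eqP Ea /andP[_ /orP[]/eqP Eb].
  - by move: nab; rewrite Ea Eb eqxx.
  - by rewrite Ea Eb.
  - by rewrite Ea Eb orbC.
  - by move: nab; rewrite Ea Eb eqxx.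
have cC : forall v, v \in c -> v \in C.
  by move=> v vc; have /cycle_edge_mem/andP[] := H _ _ (cycle_edge_next vc).
have Cc : forall u, u \in C -> u \in c.
  move=> u uC; apply/negPn/negP => nu.
  have c0 : nth u c 0 \in c by rewrite mem_nth // (leq_trans _ Sc).
  have [w wC /andP[wc nw]] := exit_lemma (P := fun z => z \in c) UC (cC _ c0) c0 uC nu.
  have := cycle_edge_next wC; rewrite -step1 // => /cycle_edge_mem/andP[_ h].
  by rewrite h in nw.
move=> x y; case xc: (x \in c); first exact: step1.
have h1 : cycle_edge c x y = false by apply/negP => /cycle_edge_mem/andP[]; rewrite xc.
have h2 : cycle_edge C x y = false by apply/negP => /cycle_edge_mem/andP[/Cc]; rewrite xc.
by rewrite h1 h2.
Qed.

Lemma good_cycle Cs c : good Cs -> uniq c -> 3 <= size c -> cycle (ecs Cs) c ->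
  exists2 C, C \in Cs & forall x y, cycle_edge c x y -> cycle_edge C x y.
Proof.
elim: Cs c => [|C Cs IH] c.
  move=> _ Uc Sc cyc; case: c Uc Sc cyc => // a l _ _ cyc.
  by have := next_cycle cyc (mem_head a l).
move=> [g okC hs] Uc Sc cyc.
have Hn : forall v, v \in c -> ecs (C :: Cs) v (next c v).
  by move=> v vc; apply: next_cycle.
case: hs => [Cs0|[s [sC sV sU]]].
  exists C; first exact: mem_head.
  apply: edges_sub => // v vc; have := Hn v vc; rewrite Cs0 /ecs /= orbF.
  done.
have FA : forall u z, ecs (C :: Cs) u z -> ~~ inV Cs u -> cycle_edge C u z.
  move=> u z; rewrite /ecs /= => /orP[//|h]; have /andP[-> _] := ecs_mem h.
  done.
case hW: (has (fun v => ~~ inV Cs v) c); last first.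
  have allV : forall v, v \in c -> inV Cs v.
    by move=> v vc; apply/negPn/negP => nv; move/negbT/hasPn: hW => /(_ v vc); rewrite nv.
  have [C' C'in HC'] : exists2 C', C' \in Cs & forall x y, cycle_edge c x y -> cycle_edge C' x y.
    apply: IH => //; apply: cycle_from_next => // v vc.
    have := Hn v vc; rewrite /ecs /= => /orP[h|//].
    have /cycle_edge_mem/andP[vC nC] := h.
    have E1 := sU _ vC (allV _ vc).
    have E2 := sU _ nC (allV _ (etrans (mem_next c v) vc)).
    by move: (next_neq Uc Sc vc); rewrite E2 E1 eqxx.
  by exists C'; rewrite ?inE ?C'in ?orbT.
have [v0 v0c nv0] := hasP hW.
have key : forall u, u \in c -> ~~ inV Cs u || (u == s).
  move=> u uc; apply/negPn/negP; rewrite negb_or negbK => /andP[Vu us].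
  have P0 : inV Cs u && (u != s) by rewrite Vu us.
  have nP0 : ~~ (inV Cs v0 && (v0 != s)) by rewrite negb_and nv0.
  have [w wc /andP[/andP[Vw ws] nPw]] :=
    exit_lemma (P := fun z => inV Cs z && (z != s)) Uc uc P0 v0c nP0.
  have wnc : next c w \in c by rewrite mem_next.
  case Vn: (inV Cs (next c w)).
    move: nPw; rewrite Vn /= negbK => /eqP En.
    have nnV : ~~ ~~ inV Cs u by rewrite negbK.
    have [v vc /andP[nVv Vnv]] := exit_lemma (P := fun z => ~~ inV Cs z) Uc v0c nv0 uc nnV.
    have /cycle_edge_mem/andP[_ nvC] := FA _ _ (Hn v vc) nVv.
    have Ens := sU _ nvC (negbNE Vnv).
    have : w = v by rewrite -(prev_next Uc w) -(prev_next Uc v) En Ens.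
    by move=> Ewv; move: Vw; rewrite Ewv (negbTE nVv).
  have := FA _ _ (etrans (ecs_sym _ _ _) (Hn w wc)) (negbT Vn).
  move=> /cycle_edge_mem/andP[_ wC].
  by move: ws; rewrite (sU _ wC Vw) eqxx.
exists C; first exact: mem_head.
apply: edges_sub => // u uc; case/orP: (key u uc) => [nV|/eqP Eu].
  exact: FA (Hn u uc) nV.
have nuc : next c u \in c by rewrite mem_next.
case/orP: (key _ nuc) => [nV|/eqP En].
  by rewrite cycle_edge_sym; apply: FA nV; rewrite ecs_sym; apply: Hn.
by move: (next_neq Uc Sc uc); rewrite En Eu eqxx.
Qed.

End Construction.

Section Construction2.
Variable T : finType.
Implicit Types (c C : seq T) (Cs : seq (seq T)) (x y : T).

Lemma good_disjoint Cs C1 C2 x y : good Cs -> C1 \in Cs -> C2 \in Cs ->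
  cycle_edge C1 x y -> cycle_edge C2 x y -> same_cycle C1 C2.
Proof.
elim: Cs => [|C Cs IH] //= [g okC hs].
have cross : forall C', C' \in Cs -> cycle_edge C x y -> cycle_edge C' x y -> False.
  move=> C' C'in h1 h2.
  case: hs => [Cs0|[s [sC sV sU]]]; first by rewrite Cs0 in C'in.
  have /andP[xC yC] := cycle_edge_mem h1.
  have /andP[xC' yC'] := cycle_edge_mem h2.
  have Ex := sU _ xC (introT hasP (ex_intro2 _ _ C' C'in xC')).
  have Ey := sU _ yC (introT hasP (ex_intro2 _ _ C' C'in yC')).
  by move: (okcyc_noloop x okC); rewrite {2}Ex -Ey h1.
rewrite !inE => /orP[/eqP->|i1] /orP[/eqP->|i2] h1 h2.
- by [].
- by case: (cross _ i2 h1 h2).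
- by case: (cross _ i1 h2 h1).
- exact: IH.
Qed.

Lemma cycle_self C : okcyc C -> cycle (cycle_edge C) C.
Proof. by case/andP=> U _; apply: cycle_from_next => // v vc; apply: cycle_edge_next. Qed.

Lemma cycle_connect (e : rel T) C x y : symmetric e -> cycle e C -> x \in C -> y \in C ->
  connect e x y.
Proof.
move=> se; case: C => // h t; rewrite /= rcons_path => /andP[p _].
have H : forall z, z \in h :: t -> connect e h z by move=> z; apply: path_connect.
move=> /H xc /H yc; apply: connect_trans yc; by rewrite (sym_connect_sym se).
Qed.

Lemma good_connect Cs x y : good Cs -> inV Cs x -> inV Cs y -> connect (ecs Cs) x y.
Proof.
elim: Cs x y => [|C Cs IH] x y //= [g okC hs].
have sub : forall Cs', subrel (ecs Cs') (ecs (C :: Cs')) by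
  move=> Cs' u w h; rewrite /ecs /= in h *; by rewrite h orbT.
have subC : subrel (cycle_edge C) (ecs (C :: Cs)) by move=> u w h; rewrite /ecs /= h.
have inC : forall u w, u \in C -> w \in C -> connect (ecs (C :: Cs)) u w.
  move=> u w uC wC; apply: (connect_sub (e := cycle_edge C)).
    by move=> a b h; apply: connect1; apply: subC.
  by apply: cycle_connect (cycle_self okC) uC wC; move=> a b; rewrite cycle_edge_sym.
have inCs : forall u w, inV Cs u -> inV Cs w -> connect (ecs (C :: Cs)) u w.
  move=> u w hu hw; apply: (connect_sub (e := ecs Cs)).
    by move=> a b h; apply: connect1; apply: sub.
  exact: IH.
rewrite /inV /= => /orP[xC|xV] /orP[yC|yV].
- exact: inC.
- case: hs => [Cs0|[s [sC sV _]]]; first by rewrite Cs0 in yV.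
  by apply: connect_trans (inC _ _ xC sC) (inCs _ _ sV yV).
- case: hs => [Cs0|[s [sC sV _]]]; first by rewrite Cs0 in xV.
  by apply: connect_trans (inCs _ _ xV sV) (inC _ _ sC yC).
- exact: inCs.
Qed.

Lemma card_nbr_cyc C v : okcyc C -> #|[set y | cycle_edge C v y]| = 2 * (v \in C).
Proof.
case/andP=> U S; case vC: (v \in C).
  have -> : [set y | cycle_edge C v y] = [set next C v; prev C v].
    by apply/setP => y; rewrite !inE cycle_edgeE // vC.
  by rewrite cards2 next_prev_neq.
apply/eqP; rewrite cards_eq0; apply/eqP/setP => y; rewrite !inE.
by apply/negP => /cycle_edge_mem; rewrite vC.
Qed.

Lemma good_deg Cs v : good Cs -> deg (ecs Cs) v = 2 * count (fun C => v \in C) Cs.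
Proof.
rewrite /deg; elim: Cs => [|C Cs IH] /= => [_|[g okC hs]].
  by apply/eqP; rewrite cards_eq0; apply/eqP/setP => y; rewrite !inE.
have -> : [set y | ecs (C :: Cs) v y] = [set y | cycle_edge C v y] :|: [set y | ecs Cs v y].
  by apply/setP => y; rewrite !inE.
rewrite cardsU IH // card_nbr_cyc //.
have -> : [set y | cycle_edge C v y] :&: [set y | ecs Cs v y] = set0.
  apply/setP => y; rewrite !inE; apply/negP => /andP[h1 h2].
  case: hs => [Cs0|[s [sC sV sU]]]; first by rewrite Cs0 in h2.
  have /andP[vC yC] := cycle_edge_mem h1.
  have /andP[vV yV] := ecs_mem h2.
  by move: (okcyc_noloop v okC); rewrite {2}(sU _ vC vV) -(sU _ yC yV) h1.
by rewrite cards0 subn0 mulnDr.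
Qed.

End Construction2.

Section Build.
Variable T : finType.

Lemma build (k : nat) : 1 <= k -> forall (U : {set T}) (f : T -> nat),
  (forall v, v \in U -> 1 <= f v) -> 2 * k + 1 <= #|U| ->
  \sum_(v in U) (f v - 1) = k - 1 ->
  exists Cs, good Cs /\ forall v, count (fun C => v \in C) Cs = (if v \in U then f v else 0).
Proof.
elim: k => [//|k IH] _ U f f1 cardU sumU.
case: k IH cardU sumU => [_ cardU sumU|k IH cardU sumU].
  have fU : forall v, v \in U -> f v = 1.
    move=> v vU; have := sumU; rewrite subnn => /eqP; rewrite sum_nat_eq0.
    move=> /forallP/(_ v); rewrite vU /= => /eqP h; have := f1 v vU; lia.
  exists [:: enum U]; split.
    split=> //; last by left.
    by rewrite /okcyc enum_uniq -cardE; lia.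
  move=> v /=; rewrite mem_enum addn0; case vU: (v \in U) => //.
  by rewrite fU.
have [s sU fs] : exists2 s, s \in U & 1 < f s.
  case: (pickP [pred s in U | 1 < f s]) => [s /andP[sU fs]|none]; first by exists s.
  have : \sum_(v in U) (f v - 1) = 0.
    apply/eqP; rewrite sum_nat_eq0; apply/forallP => v; apply/implyP => vU.
    by have := none v; rewrite /= vU /= => /negbT; rewrite -leqNgt subn_eq0.
  by rewrite sumU.
have card1 : 1 < #|[set v in U | f v == 1]|.
  have e1 : #|U| = \sum_(v in U | f v == 1) 1 + \sum_(v in U | f v != 1) 1.
    by rewrite -sum1_card (bigID (fun v => f v == 1)).
  have e2 : \sum_(v in U) (f v - 1) = \sum_(v in U | f v == 1) (f v - 1)
       + \sum_(v in U | f v != 1) (f v - 1) by rewrite (bigID (fun v => f v == 1)).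
  have e3 : \sum_(v in U | f v != 1) 1 <= \sum_(v in U | f v != 1) (f v - 1).
    apply: leq_sum => v /andP[vU fv]; have := f1 v vU; move: fv => /eqP; lia.
  have e4 : \sum_(v in [set v in U | f v == 1]) 1 = \sum_(v in U | f v == 1) 1.
    by apply: eq_bigl => v; rewrite inE.
  rewrite -sum1_card e4; lia.
have /card_gt1P [x [y [xU1 yU1 xy]]] := card1.
move: xU1 yU1; rewrite !inE => /andP[xU /eqP fx] /andP[yU /eqP fy].
have sx : s != x by apply/eqP => E; move: fs; rewrite E fx.
have sy : s != y by apply/eqP => E; move: fs; rewrite E fy.
pose U' := U :\ x :\ y.
pose f' := fun v => if v == s then (f v).-1 else f v.
have sU' : s \in U' by rewrite !inE sU sx sy.
have yUx : y \in U :\ x by rewrite !inE yU eq_sym xy.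
have cardU' : #|U| = #|U'| + 2.
  by rewrite /U' (cardsD1 x U) xU (cardsD1 y (U :\ x)) yUx; lia.
have sum1 : \sum_(v in U) (f v - 1) = \sum_(v in U') (f v - 1).
  by rewrite (big_setD1 x xU) (big_setD1 y yUx) fx fy.
have sum2 : \sum_(v in U') (f v - 1) = (f s - 1) + \sum_(v in U' :\ s) (f v - 1).
  by rewrite (big_setD1 s sU').
have sum3 : \sum_(v in U') (f' v - 1) = (f' s - 1) + \sum_(v in U' :\ s) (f' v - 1).
  by rewrite (big_setD1 s sU').
have sum4 : \sum_(v in U' :\ s) (f' v - 1) = \sum_(v in U' :\ s) (f v - 1).
  by apply: eq_bigr => v; rewrite !inE /f' => /andP[/negbTE -> _].
have f's : f' s = (f s).-1 by rewrite /f' eqxx.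
have [Cs' [g' cnt']] : exists Cs, good Cs /\ forall v,
    count (fun C => v \in C) Cs = (if v \in U' then f' v else 0).
  apply: IH => //.
  - move=> v; rewrite !inE /f' => /and3P[_ _ vU]; have := f1 v vU.
    by case: (v =P s) => [->|]; lia.
  - lia.
  - lia.
exists ([:: s; x; y] :: Cs'); split.
  split=> //.
    rewrite /okcyc /= !inE !negb_or sx sy xy; done.
  right; exists s; split.
  - by rewrite mem_head.
  - by rewrite /inV has_count cnt' sU' f's; lia.
  - move=> w; rewrite !inE => /or3P[/eqP->//|/eqP->|/eqP->];
      by rewrite /inV has_count cnt' !inE ?eqxx ?andbF.
move=> v /=; rewrite cnt' !inE.
case: (v =P s) => [->|vs]; first by rewrite sU sx sy f's /=; lia.
case: (v =P x) => [->|vx]; first by rewrite /= xU fx andbF.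
case: (v =P y) => [->|vy]; first by rewrite /= yU fy.
by rewrite /= /f'; case: (v =P s).
Qed.

End Build.

Section Graphs.
Variable T : finType.
Implicit Types (c C : seq T) (Cs : seq (seq T)) (x y : T).

Lemma next_last y p : uniq (y :: p) -> next (y :: p) (last y p) = y.
Proof.
move=> U; rewrite next_nth mem_last.
have -> : index (last y p) (y :: p) = size p.
  by rewrite (last_nth y) index_uniq.
by rewrite nth_default.
Qed.

Lemma make_cycle (e r : rel T) x y p : subrel r e -> e x y -> path r y p -> last y p = x ->
  ~~ r y x -> x != y ->
  exists c, [/\ uniq c, 3 <= size c, cycle e c, cycle_edge c x y &
    forall u, u \in c -> r u (next c u) || ((u == x) && (next c u == y))].
Proof.
move=> sub exy pth lst nr xy; move: exy nr xy; rewrite -lst.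
case: (shortenP pth) => p' pp' Up' _ exy nr xy.
have sz : 2 <= size p'.
  case: p' pp' Up' exy nr xy => [|z [|w l]] //=; first by rewrite eqxx.
  by rewrite andbT => ->.
pose r' := fun u w => r u w || ((u == last y p') && (w == y)).
have cr : cycle r' (y :: p').
  rewrite /= rcons_path; apply/andP; split; last by rewrite /r' !eqxx orbT.
  by apply: sub_path pp' => u w h; rewrite /r' h.
exists (y :: p'); split => //.
- rewrite /= rcons_path; apply/andP; split=> //; exact: sub_path pp'.
- by rewrite /cycle_edge mem_last next_last // eqxx.
- by move=> u uc; apply: next_cycle cr uc.
Qed.

Lemma remove_edge_sym (e : rel T) x y : symmetric e -> symmetric (remove_edge e x y).
Proof.
move=> se a b; rewrite /remove_edge se; congr (_ && _).
by case: (a == x) (b == y) (a == y) (b == x) => [] [] [] [].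
Qed.

Lemma cycles_bridgeless (e : rel T) : symmetric e -> connected_graph e ->
  (forall x y, e x y -> exists c, is_cycle e c /\ cycle_edge c x y) -> bridgeless e.
Proof.
move=> se con cyc x y exy.
pose e' := remove_edge e x y.
have se' : symmetric e' by apply: remove_edge_sym.
have key : forall a b, [|| (a == x) && (b == y) | (a == y) && (b == x)] ->
    forall c, is_cycle e c -> a \in c -> next c a = b -> connect e' b a.
  move=> a b ab c [Uc Sc cy] ac na.
  apply/negPn/negP => nP.
  have bc : b \in c by rewrite -na mem_next.
  have [v vc /andP[Pv nPn]] := exit_lemma (P := fun z => connect e' b z) Uc bc
    (connect0 _ _) ac nP.
  case: (v =P a) => [Eva|nva]; first by move: nP; rewrite -Eva Pv.
  have ev : e v (next c v) by apply: next_cycle.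
  case rem : [|| (v == x) && (next c v == y) | (v == y) && (next c v == x)].
    have [vb nvb] : v = b /\ next c v = a.
      case/orP: ab => /andP[/eqP Ea /eqP Eb]; rewrite Ea Eb in nva *;
        case/orP: rem => /andP[/eqP h1 /eqP h2]; (try by split); by case: nva.
    have [y1 [z1 [E1 E2 _ _ zx]]] := rot3 Uc Sc ac.
    by move: zx; rewrite -E2 -E1 na -vb nvb eqxx.
  have : e' v (next c v) by rewrite /e' /remove_edge ev rem.
  by move=> h; move: nPn; rewrite (connect_trans Pv (connect1 h)).
have cxy : connect e' x y.
  have [c [cc ce]] := cyc _ _ exy.
  case/orP: ce => /andP[xc /eqP nx].
    rewrite (sym_connect_sym se'); apply: (key x y) cc xc nx.
    by rewrite !eqxx.
  by apply: (key y x) cc xc nx; rewrite !eqxx orbT.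
move=> a b; apply: (connect_sub (e := e)) (con a b) => u w euw.
case rem : [|| (u == x) && (w == y) | (u == y) && (w == x)].
  case/orP: rem => /andP[/eqP-> /eqP->] //.
  by rewrite (sym_connect_sym se').
by apply: connect1; rewrite /e' /remove_edge euw rem.
Qed.

Lemma ecs_props Cs : good Cs -> Cs != [::] -> (forall v, inV Cs v) ->
  [/\ simple_graph (ecs Cs), cactus (ecs Cs) & bridgeless (ecs Cs)].
Proof.
move=> g ne cov.
have sym := @ecs_sym T Cs.
have isc : forall C, C \in Cs -> is_cycle (ecs Cs) C.
  move=> C CC; have /andP[U S] := good_ok g CC; split=> //.
  apply: cycle_from_next => // v vc; apply/hasP; exists C => //.
  exact: cycle_edge_next.
have con : connected_graph (ecs Cs) by move=> x y; apply: good_connect.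
split.
- split=> // x; apply/negP => /hasP[C CC h].
  by move: (okcyc_noloop x (good_ok g CC)); rewrite h.
- split=> // x y c1 c2 _ [U1 S1 cy1] [U2 S2 cy2] h1 h2.
  have [C1 C1in H1] := good_cycle g U1 S1 cy1.
  have [C2 C2in H2] := good_cycle g U2 S2 cy2.
  have E1 := cyc_in_cyc (introT andP (conj U1 S1)) (good_ok g C1in) H1.
  have E2 := cyc_in_cyc (introT andP (conj U2 S2)) (good_ok g C2in) H2.
  have D := good_disjoint g C1in C2in (etrans (esym (E1 x y)) h1) (etrans (esym (E2 x y)) h2).
  by move=> u w; rewrite E1 E2 D.
- apply: cycles_bridgeless => // x y /hasP[C CC h].
  by exists C; split=> //; apply: isc.
Qed.

End Graphs.

Section Parity.
Variable T : finType.
Implicit Types (c C : seq T) (x y : T).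

Lemma even_pairing (R : T -> T -> Prop) : (forall y z, R y z -> R z y) ->
  forall A : {set T}, (forall y, y \in A -> exists z, [/\ z \in A, z != y & R y z]) ->
  (forall y z z', y \in A -> z \in A -> z' \in A -> z != y -> z' != y -> R y z -> R y z' -> z = z') ->
  ~~ odd #|A|.
Proof.
move=> Rs A.
have [N] := ubnP #|A|; elim: N A => [//|N IH] A cA ex un.
case: (set_0Vmem A) => [->|[y yA]]; first by rewrite cards0.
have [z [zA zy Ryz]] := ex y yA.
pose A' := A :\ y :\ z.
have cardA : #|A| = #|A'| + 2.
  have zAy : z \in A :\ y by rewrite !inE zy.
  by rewrite /A' (cardsD1 y A) yA (cardsD1 z (A :\ y)) zAy; lia.
have sub : forall w, w \in A' -> w \in A by move=> w; rewrite !inE => /and3P[].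
rewrite cardA addn2 /= negbK.
apply: IH.
- by move: cA; rewrite cardA; lia.
- move=> w wA'; have wA := sub _ wA'.
  have [zw [zwA zww Rwzw]] := ex w wA.
  exists zw; split => //.
  move: wA'; rewrite !inE => /and3P[wz wy _].
  rewrite zwA andbT; apply/andP; split.
    apply/eqP => E; rewrite E in Rwzw.
    have yz : y != z by rewrite eq_sym.
    have := un z w y zA wA yA wz yz (Rs _ _ Rwzw) (Rs _ _ Ryz).
    by move=> E'; move: wy; rewrite E' eqxx.
  apply/eqP => E; rewrite E in Rwzw.
  have := un y w z yA wA zA wy zy (Rs _ _ Rwzw) Ryz.
  by move=> E'; move: wz; rewrite E' eqxx.
- by move=> w a b /sub wA /sub aA /sub bA; apply: un.
Qed.

End Parity.

Section Parity2.
Variable T : finType.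
Implicit Types (c C : seq T) (x y : T).

Lemma cycle_edge_e (e : rel T) c x y : symmetric e -> is_cycle e c -> cycle_edge c x y -> e x y.
Proof.
move=> se [U S cy]; rewrite /cycle_edge => /orP[]/andP[xc /eqP <-].
  exact: next_cycle.
by rewrite se; apply: next_cycle.
Qed.

Lemma edge_on_cycle (e : rel T) x y : simple_graph e -> bridgeless e -> e x y ->
  exists c, is_cycle e c /\ cycle_edge c x y.
Proof.
move=> [irr se] br exy.
have /connectP [p pth lst] := br x y exy y x.
have sub : subrel (remove_edge e x y) e by move=> a b /andP[].
have nr : ~~ remove_edge e x y y x by rewrite /remove_edge !eqxx /= orbT andbF.
have xy : x != y by apply/eqP => E; move: exy; rewrite E irr.
have [c [U S cy ce _]] := make_cycle sub exy pth (esym lst) nr xy.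
by exists c.
Qed.

Lemma cactus_even (e : rel T) : simple_graph e -> cactus e -> bridgeless e ->
  forall v, ~~ odd (deg e v).
Proof.
move=> sg [con cac] br v; have [irr se] := sg.
pose R := fun y z => exists c, [/\ is_cycle e c, cycle_edge c v y & cycle_edge c v z].
apply: (@even_pairing T R).
- by move=> y z [c [h1 h2 h3]]; exists c.
- move=> y; rewrite inE => evy.
  have [c [cc ce]] := edge_on_cycle sg br evy.
  have [U S _] := cc.
  move: (ce); rewrite cycle_edgeE // => /andP[vc hy].
  have npn := next_prev_neq U S vc.
  pose z := if y == next c v then prev c v else next c v.
  have cez : cycle_edge c v z.
    by rewrite cycle_edgeE // vc /z; case: (y == next c v); rewrite eqxx ?orbT.
  exists z; split.
  + by rewrite inE; apply: cycle_edge_e cc cez.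
  + rewrite /z; case: (y =P next c v) => [->|ny]; first by rewrite eq_sym.
    by move: hy; rewrite (negbTE (introN eqP ny)) /= => /eqP ->.
  + by exists c.
- move=> y z z'; rewrite !inE => evy _ _ zy z'y [c1 [cc1 a1 b1]] [c2 [cc2 a2 b2]].
  have sc := cac _ _ _ _ evy cc1 cc2 a1 a2.
  move: b2; rewrite -sc => b2.
  have [U S _] := cc1.
  move: a1 b1 b2; rewrite !cycle_edgeE // => /andP[vc hy] /andP[_ hz] /andP[_ hz'].
  move: zy z'y; case/orP: hy => /eqP->; case/orP: hz => /eqP->; case/orP: hz' => /eqP->;
    rewrite ?eqxx //.
Qed.

End Parity2.

Section Tree.
Variables (T : finType) (e : rel T) (r : T).
Hypothesis se : symmetric e.
Hypothesis con : connected_graph e.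

Fixpoint ball k : {set T} :=
  if k is k'.+1 then ball k' :|: [set w | [exists u in ball k', e u w]] else [set r].

Lemma ball_path x k p : x \in ball k -> path e x p -> last x p \in ball (k + size p).
Proof.
elim: p x k => [|y p IH] x k /=; first by rewrite addn0.
move=> xk /andP[exy pth]; rewrite addnS -addSn; apply: IH pth.
rewrite /= !inE; apply/orP; right; apply/existsP; exists x; by rewrite xk.
Qed.

Lemma reach v : exists k, v \in ball k.
Proof.
have /connectP[p pth ->] := con r v; exists (0 + size p); apply: ball_path pth.
by rewrite /= inE.
Qed.

Definition dist v := ex_minn (reach v).

Lemma dist_ball v : v \in ball (dist v).
Proof. by rewrite /dist; case: ex_minnP. Qed.

Lemma dist_min v k : v \in ball k -> dist v <= k.
Proof. by rewrite /dist; case: ex_minnP => m _ H /H. Qed.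

Lemma dist_r : dist r = 0.
Proof. by apply/eqP; rewrite -leqn0; apply: dist_min; rewrite /= inE. Qed.

Lemma dist_pos v : v != r -> 0 < dist v.
Proof.
move=> vr; have := dist_ball v; case: (dist v) => // /=; rewrite inE.
by rewrite (negbTE vr).
Qed.

Lemma dist_par_ex v : v != r -> exists u, e u v && (dist u < dist v).
Proof.
move=> vr; have := dist_ball v; have := dist_pos vr.
case E: (dist v) => [//|k] _ /=; rewrite !inE => /orP[vk|].
  by have := dist_min vk; rewrite E ltnn.
case/existsP => u /andP[uk euv]; exists u; rewrite euv /=.
by have := dist_min uk; lia.
Qed.

Definition par v := if v == r then r else
  if [pick u | e u v && (dist u < dist v)] is Some u then u else r.

Lemma par_r : par r = r.
Proof. by rewrite /par eqxx. Qed.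

Lemma par_prop v : v != r -> e (par v) v && (dist (par v) < dist v).
Proof.
move=> vr; rewrite /par (negbTE vr).
case: pickP => [u //|none]; have [u h] := dist_par_ex vr.
by move: (none u); rewrite h.
Qed.

Lemma dist_par_le v : dist (par v) <= dist v.
Proof.
case: (v =P r) => [->|/eqP vr]; first by rewrite par_r.
by have /andP[_ /ltnW] := par_prop vr.
Qed.

Lemma iter_par_r j w : dist w <= j -> iter j par w = r.
Proof.
elim: j w => [|j IH] w.
  by rewrite leqn0 => /eqP h; apply/eqP; apply/negPn/negP => /dist_pos; rewrite h.
move=> h; rewrite iterSr; apply: IH.
case: (w =P r) => [->|/eqP wr]; first by rewrite par_r dist_r.
by have /andP[_ lt] := par_prop wr; lia.
Qed.

Lemma dist_iter i w : dist (iter i par w) <= dist w.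
Proof.
elim: i w => [|i IH] w //=; apply: leq_trans (dist_par_le _) _; exact: IH.
Qed.

Definition isanc x v := [exists i : 'I_(dist v).+1, iter i par v == x].

Lemma isancP x v : reflect (exists i, iter i par v = x) (isanc x v).
Proof.
apply: (iffP existsP) => [[i /eqP h]|[i h]]; first by exists i.
case: (leqP i (dist v)) => hi.
  by exists (Ordinal (hi : i < (dist v).+1)); rewrite h.
exists ord_max; rewrite /= iter_par_r // -h iter_par_r //; lia.
Qed.

Lemma isanc_refl v : isanc v v.
Proof. by apply/isancP; exists 0. Qed.

Lemma isanc_root v : isanc r v.
Proof. by apply/isancP; exists (dist v); rewrite iter_par_r. Qed.

Lemma isanc_par x v : v != r -> isanc x v = (x == v) || isanc x (par v).
Proof.
move=> vr; apply/isancP/orP => [[[|i] h]|[/eqP->|/isancP[i h]]].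
- by left; rewrite -h.
- by right; apply/isancP; exists i; rewrite -iterSr.
- by exists 0.
- by exists i.+1; rewrite iterSr.
Qed.

Lemma isanc_dist x v : isanc x v -> dist x <= dist v.
Proof. by case/isancP => i <-; apply: dist_iter. Qed.

Lemma isanc_dist_lt x v : isanc x v -> x != v -> dist x < dist v.
Proof.
case/isancP => [[|i] <-] //=; first by rewrite eqxx.
case: (v =P r) => [->|/eqP vr].
  by rewrite (iter_fix _ par_r) par_r eqxx.
move=> _; rewrite -iterS iterSr; have /andP[_ lt] := par_prop vr.
by apply: leq_ltn_trans (dist_iter _ _) lt.
Qed.

Lemma isanc_r x : isanc x r -> x = r.
Proof. by case/isancP => i <-; elim: i => //= i ->; rewrite par_r. Qed.

End Tree.

Section Bound.
Variables (T : finType) (e : rel T) (r : T).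
Hypothesis se : symmetric e.
Hypothesis irr : irreflexive e.
Hypothesis con : connected_graph e.
Hypothesis cac : forall x y c1 c2, e x y -> is_cycle e c1 -> is_cycle e c2 ->
    cycle_edge c1 x y -> cycle_edge c2 x y -> same_cycle c1 c2.

Local Notation P := (par r con).
Local Notation Q := (isanc r con).
Local Notation D := (dist r con).

Definition tr u w := (u != r) && (w == P u).
Definition tru u w := tr u w || tr w u.
Definition g a b := if Q a b then P b else a.

Lemma tru_sym : symmetric tru.
Proof. by move=> u w; rewrite /tru orbC. Qed.

Lemma tru_e u w : tru u w -> e u w.
Proof.
by case/orP => /andP[ur /eqP ->]; have /andP[h _] := par_prop con ur; rewrite // se.
Qed.

Lemma tree_connect v : connect tru v r.
Proof.
have [N] := ubnP (D v); elim: N v => [//|N IH] v lt.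
case: (v =P r) => [->|/eqP vr]; first exact: connect0.
have /andP[_ lt'] := par_prop con vr.
apply: (@connect_trans _ _ (P v)); first by apply: connect1; rewrite /tru /tr vr eqxx.
apply: IH; lia.
Qed.

Lemma g_props a b : e a b -> ~~ tru a b ->
  [/\ g a b != r, Q (g a b) a != Q (g a b) b & g a b != g b a].
Proof.
move=> eab ntr.
have ab : a != b by apply/eqP => E; move: eab; rewrite E irr.
rewrite /g; case Qab: (Q a b).
  have br : b != r by apply/eqP => E; move: Qab; rewrite E => /isanc_r E'; move: ab; rewrite E' E eqxx.
  have /andP[_ ltb] := par_prop con br.
  have Qab' : Q a (P b) by move: Qab; rewrite isanc_par // (negbTE ab).
  have apb : a != P b.
    by apply/eqP => E; move: ntr; rewrite /tru /tr br E eqxx orbT.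
  have Qba : Q b a = false.
    apply/negbTE/negP => /isanc_dist h; have := isanc_dist_lt Qab ab; lia.
  rewrite Qba; split.
  - apply/eqP => E; move: Qab'; rewrite E => /isanc_r E'; move: apb; by rewrite E' E eqxx.
  - rewrite (isanc_par _ _ br) isanc_refl orbT.
    case QPa: (Q (P b) a) => //.
    have h1 := isanc_dist QPa; have h2 := isanc_dist_lt Qab' apb; lia.
  - by apply/eqP => E; move: ltb; rewrite E ltnn.
have ar : a != r by apply/eqP => E; move: Qab; rewrite E isanc_root.
split => //; first by rewrite isanc_refl Qab.
case: (Q b a); last by [].
have /andP[_ lta] := par_prop con ar.
by apply/eqP => E; move: lta; rewrite -E ltnn.
Qed.

Lemma crossing x u w : tru u w -> Q x u != Q x w ->
  ((u == x) && (w == P x)) || ((w == x) && (u == P x)).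
Proof.
case/orP => /andP[ur /eqP Ew].
  rewrite (isanc_par _ _ ur) -Ew; case: (x =P u) => [->|_] /=; first by rewrite eqxx Ew eqxx.
  by rewrite eqxx.
rewrite [Q x w](isanc_par _ _ ur) -Ew; case: (x =P w) => [->|_] /=; first by rewrite eqxx Ew eqxx orbT.
by rewrite eqxx.
Qed.

Lemma two_exits c (q : pred T) a b : uniq c -> a \in c -> b \in c -> q a != q b ->
  exists u1 u2, [/\ u1 \in c, u2 \in c, u1 != u2, q u1 != q (next c u1) & q u2 != q (next c u2)].
Proof.
move=> U ac bc.
wlog qa : a b ac bc / q a.
  move=> H; case/orP: (orbN (q a)) => qa; first exact: (H a b).
  move=> h; apply: (H b a) => //; last by rewrite eq_sym.
  by move: h qa; case: (q b); case: (q a).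
move=> h; have nqb : ~~ q b by move: h; rewrite qa; case: (q b).
have [u1 u1c /andP[q1 n1]] := exit_lemma U ac qa bc nqb.
have nnq : ~~ ~~ q a by rewrite qa.
have [u2 u2c /andP[q2 n2]] := exit_lemma (P := fun z => ~~ q z) U bc nqb ac nnq.
exists u1, u2; split => //.
- by apply/eqP => E; move: q2; rewrite -E q1.
- by rewrite q1 (negbTE n1).
- by rewrite (negbTE q2) (negbNE n2).
Qed.

Lemma fund_cycle a b : e a b -> ~~ tru a b ->
  exists c, [/\ is_cycle e c, cycle_edge c b a,
    (forall u, u \in c -> tru u (next c u) || ((u == b) && (next c u == a))) &
    cycle_edge c (g a b) (P (g a b))].
Proof.
move=> eab ntr.
have ab : a != b by apply/eqP => E; move: eab; rewrite E irr.
have /connectP[p pth lst] : connect tru a b.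
  apply: connect_trans (tree_connect a) _.
  by rewrite (sym_connect_sym tru_sym) tree_connect.
have ba : b != a by rewrite eq_sym.
have [c [U S cy ce prop]] := make_cycle tru_e (etrans (se b a) eab) pth (esym lst) ntr ba.
exists c; split => //.
have [_ cross _] := g_props eab ntr.
have /andP[bc ac] := cycle_edge_mem ce.
have [u1 [u2 [u1c u2c u12 h1 h2]]] := two_exits U ac bc cross.
have [u [uc ub hu]] : exists u, [/\ u \in c, u != b & Q (g a b) u != Q (g a b) (next c u)].
  case: (u1 =P b) => [E|/eqP n1]; last by exists u1.
  by exists u2; split => //; rewrite -E eq_sym.
have tu : tru u (next c u) by move: (prop u uc); rewrite (negbTE ub) /= orbF.
case/orP: (crossing tu hu) => /andP[/eqP E1 /eqP E2].
  by subst u; rewrite /cycle_edge uc E2 eqxx.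
by subst u; rewrite /cycle_edge uc E1 eqxx orbT.
Qed.

Lemma g_inj a b a' b' : e a b -> ~~ tru a b -> e a' b' -> ~~ tru a' b' ->
  g a b = g a' b' -> (a, b) = (a', b').
Proof.
move=> eab ntr eab' ntr' Eg.
have [c [cc ce prop ceg]] := fund_cycle eab ntr.
have [c' [cc' ce' prop' ceg']] := fund_cycle eab' ntr'.
have [xr _ gba] := g_props eab ntr.
have exp : e (g a b) (P (g a b)) by have /andP[h _] := par_prop con xr; rewrite se.
rewrite -Eg in ceg'. have sc := cac exp cc cc' ceg ceg'.
have : cycle_edge c' b a by rewrite -sc.
case/orP => /andP[xc /eqP nx].
  move: (prop' _ xc); rewrite nx => /orP[t|/andP[/eqP -> /eqP ->]] //.
  by move: ntr; rewrite tru_sym t.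
move: (prop' _ xc); rewrite nx => /orP[t|/andP[/eqP E1 /eqP E2]]; first by move: ntr; rewrite t.
by move: gba; rewrite Eg -E1 -E2 eqxx.
Qed.

Lemma edge_count : #|[set p : T * T | e p.1 p.2]| <= 3 * (#|T| - 1).
Proof.
set E := [set p : T * T | e p.1 p.2].
set TT := [set p : T * T | tru p.1 p.2].
have c1 : #|E :\: TT| <= #|T| - 1.
  have inj : {in E :\: TT &, injective (fun p => g p.1 p.2)}.
    move=> [a b] [a' b']; rewrite !inE /= => /andP[n1 e1] /andP[n2 e2].
    exact: g_inj.
  rewrite -(card_in_imset inj).
  apply: leq_trans (_ : #|[set~ r]| <= _); last by rewrite cardsC1; lia.
  apply: subset_leq_card; apply/subsetP => z /imsetP[[a b]].
  rewrite !inE /= => /andP[n1 e1] ->.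
  by have [h _ _] := g_props e1 n1.
have c2 : #|TT| <= 2 * (#|T| - 1).
  have sub : TT \subset [set (v, P v) | v in [set~ r]] :|: [set (P v, v) | v in [set~ r]].
    apply/subsetP => [[u w]]; rewrite !inE /= /tru /tr => /orP[]/andP[ur /eqP ->].
      by apply/orP; left; apply/imsetP; exists u; rewrite ?inE.
    by apply/orP; right; apply/imsetP; exists w; rewrite ?inE.
  apply: leq_trans (subset_leq_card sub) _.
  rewrite cardsU; apply: leq_trans (leq_subr _ _) _.
  have := leq_imset_card (fun v => (v, P v)) [set~ r].
  have := leq_imset_card (fun v => (P v, v)) [set~ r].
  rewrite cardsC1; lia.
rewrite -(cardsID TT E).
have : #|E :&: TT| <= #|TT| by apply: subset_leq_card; apply: subsetIr.
lia.
Qed.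

End Bound.

Lemma sum_deg (T : finType) (e : rel T) :
  \sum_v deg e v = #|[set p : T * T | e p.1 p.2]|.
Proof.
rewrite -sum1_card.
have -> : \sum_(p in [set p : T * T | e p.1 p.2]) 1 = \sum_(p | true && e p.1 p.2) 1.
  by apply: eq_bigl => p; rewrite inE.
rewrite -(pair_big_dep xpredT (fun i j => e i j) (fun _ _ => 1)).
apply: eq_bigr => v _; rewrite /deg -sum1_card; apply: eq_bigl => y; by rewrite inE.
Qed.

Lemma sumn_ord n (d : seq nat) : size d = n -> sumn d = \sum_(i < n) nth 0 d i.
Proof. by move=> sd; rewrite sumnE (big_nth 0) sd big_mkord. Qed.

Theorem theorem5p2 (n : nat) (d : seq nat) :
  3 <= n -> degree_sequence n d ->
  ((exists e : rel 'I_n, realization d e /\ cactus e /\ bridgeless e) <->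
   ((sumn d)./2 <= (3 * (n - 1))./2 /\ all (fun k => ~~ odd k) d)).
Proof.
move=> n3 [sd rng ev srt]; split.
  move=> [e [[sg degs] [[con cac] br]]].
  have [irr se] := sg.
  split.
    apply: half_leq; rewrite (sumn_ord sd).
    have -> : \sum_(i < n) nth 0 d i = \sum_(i < n) deg e i by apply: eq_bigr => i _; rewrite degs.
    have r : 'I_n by exists 0; lia.
    rewrite sum_deg; apply: leq_trans (edge_count r se irr con cac) _.
    by rewrite card_ord.
  apply/(all_nthP 0) => i ilt; rewrite sd in ilt.
  by have := cactus_even sg (conj con cac) br (Ordinal ilt); rewrite degs.
move=> [bound alev].
have nth_ev : forall i : 'I_n, ~~ odd (nth 0 d i).
  by move=> i; apply: (all_nthP 0 alev); rewrite sd.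
have nth_rng : forall i : 'I_n, 1 <= nth 0 d i <= n - 1.
  by move=> i; apply: (all_nthP 0 rng); rewrite sd.
pose f := fun i : 'I_n => (nth 0 d i)./2.
have fd : forall i : 'I_n, nth 0 d i = 2 * f i.
  by move=> i; have := odd_double_half (nth 0 d i); rewrite (negbTE (nth_ev i)) /f; lia.
have f1 : forall i : 'I_n, 1 <= f i.
  by move=> i; have := fd i; have := nth_rng i; lia.
set S := \sum_(i < n) f i.
have sumd : sumn d = 2 * S by rewrite (sumn_ord sd) /S big_distrr; apply: eq_bigr => i _.
have Sn : \sum_(i < n) (f i - 1) + n = S.
  have E : \sum_(i < n) 1 = n by rewrite sum1_card card_ord.
  rewrite -[X in _ + X = _]E -big_split; apply: eq_bigr => i _. by rewrite /= subnK // f1.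
have hb : ((3 * (n - 1))./2).*2 <= 3 * (n - 1).
  by have := odd_double_half (3 * (n - 1)); lia.
have mS : (sumn d)./2 = S by rewrite sumd mul2n doubleK.
rewrite mS in bound.
have [Cs [g cnt]] : exists Cs, good Cs /\ forall v, count (fun C => v \in C) Cs =
    (if v \in [set: 'I_n] then f v else 0).
  apply: (@build _ (S - n + 1)).
  - lia.
  - by move=> v _; apply: f1.
  - rewrite cardsT card_ord; lia.
  - have -> : \sum_(v in [set: 'I_n]) (f v - 1) = \sum_(i < n) (f i - 1).
      by apply: eq_bigl => v; rewrite inE.
    lia.
have cnt' : forall v, count (fun C => v \in C) Cs = f v by move=> v; rewrite cnt inE.
have inv : forall v, inV Cs v by move=> v; rewrite /inV has_count cnt'; apply: f1.
have ne : Cs != [::].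
  have r : 'I_n by exists 0; lia.
  by apply/eqP => E; move: (inv r); rewrite E.
have [sg cac br] := ecs_props g ne inv.
exists (ecs Cs); split; last by split.
split => // i; rewrite good_deg // cnt' fd //.
Qed.
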